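(* Let $\varphi$ be an individually rational rule. Then $\varphi$ is pick-an-object implementable in perfect ex-post equilibrium if and only if $\varphi$ is strategy-proof and satisfies monotonic discoverability. Moreover, for every rule that is pick-an-object implementable in perfect ex-post equilibrium, straightforward strategies constitute a perfect ex-post equilibrium profile of every pick-an-object mechanism that sequentializes that rule.
   Context: Let $A=\{a_1,\dots,a_n\}$ be a finite set of agents and $O=\{o_1,\dots,o_m\}\cup\{\emptyset\}$ a finite set of object types ($\emptyset$ the null object). Each agent $a$ has a strict preference $P_a$ over $O$ with weak version $R_a$. $\mathbb{P}$ is the set of strict preferences over $O$, $\mathcal{P}=\mathbb{P}^n$ the set of profiles; $P_{-a}$ denotes the preferences of agents other than $a$. An allocation is a function $\mu:A\to O$. A rule is $\varphi:\mathcal{P}\to\{\text{allocations}\}$, $\varphi_a(P)=\varphi(P)(a)$. $\varphi$ is individually rational if $\varphi_a(P)R_a\emptyset$ always; strategy-proof if $\varphi_a(P_a,P_{-a})\,R_a\,\varphi_a(P'_a,P_{-a})$ for all $a$, $P$, $P'_a\in\mathbb{P}$. Monotonic discoverability: for $P\in\mathcal{P}$ and allocation $\mu$, $\mathcal{L}(P,\mu)$ is the set of profiles $P'$ such that for every agent $a$, $P'_a$ agrees with $P_a$ on $\mu(a)$ and on all objects $P_a$ ranks above $\mu(a)$ (same set above $\mu(a)$, same order), possibly differing below. $\varphi$ satisfies monotonic discoverability if for every $\mu$ and $P$, either $\varphi(P)=\mu$ or some agent $a^*$ has $\varphi_{a^*}(P')\neq\mu(a^* )$ for all $P'\in\mathcal{L}(P,\mu)$.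 Pick-an-object (PAO) mechanisms: a choice history is a finite (possibly empty) sequence $((\Omega_1,\omega_1),\dots,(\Omega_k,\omega_k))$ with $\Omega_j\subseteq O$, $\omega_j\in\Omega_j$; $\omega_k$ is its last choice. A collective history is an $n$-tuple of choice histories; $h^{A-\emptyset}$ is the tuple of empty ones. A menu function $\mathbb{S}$ maps collective histories to $n$-tuples of subsets of $O$ such that the menus in $\mathbb{S}(h^{A-\emptyset})$ are non-empty and, for other collective histories, agent $i$'s menu is a subset of $\Omega_k\setminus\{\omega_k\}$, where $(\Omega_k,\omega_k)$ is the last entry of $i$'s history. The PAO mechanism $\mathbb{S}$: in period 1 every agent chooses from her initial menu; in each later period, given the current collective history $h^A$, if all menus in $\mathbb{S}(h^A)$ are empty the procedure stops and each agent receives her last chosen object, otherwise each agent with a non-empty menu chooses an element of it; each (menu, choice) is appended to the chooser's history. $H^A_{\mathbb{S}}$ is the set of collective histories that can arise; $H^A_{\mathbb{S}}(a)$ the set of agent $a$'s individual histories within them. The straightforward strategy w.r.t. $P_a$ chooses the $P_a$-best element of every menu. $\mathbb{S}$ sequentializes $\varphi$ if, for every $P$, when all agents play straightforward strategies w.r.t. $P$ the outcome is $\varphi(P)$. Strategies and equilibrium: a strategy for agent $a$ maps each pair $(h,\Omega)$ of an own history $h\in H^A_{\mathbb{S}}(a)\cup\{\emptyset\}$ and a menu $\Omega$ to an element of $\Omega$ (so that the extended history is in $H^A_{\mathbb{S}}(a)$). A type-strategy $\Sigma_a$ maps each preference to a strategy. For $h^A\in H^A_{\mathbb{S}}\cup\{h^{A-\emptyset}\}$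 and strategy profile $\sigma$, $\mathcal{O}|_{h^A}(\sigma)$ is the allocation produced by running $\mathbb{S}$ from $h^A$ with agents following $\sigma$, and $\mathcal{O}_a|_{h^A}(\sigma)$ is agent $a$'s assignment. A type-strategy profile $(\Sigma_a)_{a\in A}$ is a perfect ex-post equilibrium if for every $a\in A$, $h^A\in H^A_{\mathbb{S}}\cup\{h^{A-\emptyset}\}$, strategy $\sigma'_a$, and $P\in\mathcal{P}$: $\mathcal{O}_a|_{h^A}(\Sigma_a(P_a),(\Sigma_{a'}(P_{a'}))_{a'\neq a})\ R_a\ \mathcal{O}_a|_{h^A}(\sigma'_a,(\Sigma_{a'}(P_{a'}))_{a'\neq a})$. A rule $\varphi$ is pick-an-object implementable in perfect ex-post equilibrium if some PAO mechanism sequentializes $\varphi$ and, in it, the profile in which each agent of type $P_a$ plays the straightforward strategy w.r.t. $P_a$ is a perfect ex-post equilibrium. *)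

(* Defs.v *)
From mathcomp Require Import all_boot.
Set Implicit Arguments. Unset Strict Implicit. Unset Printing Implicit Defensive.

Section Model.
Variables (Agent Obj : finType).

(* Object types: the real objects [Some o] plus the null object [None]. *)
Local Notation O := (option Obj).
Definition null : O := None.

(* A strict preference: [prel p x y] means "x is strictly preferred to y". *)
Definition strict_pref (P : rel O) : Prop :=
  irreflexive P /\ transitive P /\ (forall x y, x != y -> P x y || P y x).
Definition pref := {P : rel O | strict_pref P}.
Definition prel (p : pref) : rel O := proj1_sig p.
Definition weak (p : pref) (x y : O) : bool := (x == y) || prel p x y.

Definition profile := Agent -> pref.
Definition allocation := Agent -> O.
Definition rule := profile -> allocation.

Definition upd (P : profile) (a : Agent) (pa : pref) : profile :=
  fun b => if b == a then pa else P b.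

Definition individually_rational (phi : rule) : Prop :=
  forall (P : profile) (a : Agent), weak (P a) (phi P a) null.

Definition strategy_proof (phi : rule) : Prop :=
  forall (P : profile) (a : Agent) (pa' : pref),
    weak (P a) (phi P a) (phi (upd P a pa') a).

Definition agrees_above (p p' : pref) (o : O) : Prop :=
  (forall x, prel p' x o = prel p x o) /\
  (forall x y, prel p x o -> prel p y o -> prel p' x y = prel p x y).

Definition Lset (P : profile) (mu : allocation) (P' : profile) : Prop :=
  forall a, agrees_above (P a) (P' a) (mu a).

Definition monotonic_discoverability (phi : rule) : Prop :=
  forall (mu : allocation) (P : profile),
    (forall a, phi P a = mu a) \/
    exists a0 : Agent, forall P' : profile, Lset P mu P' -> phi P' a0 <> mu a0.

Definition entry := ({set O} * O)%type.            (* (menu, choice) *)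
Definition chist := seq entry.
Definition chist_valid (h : chist) : bool := all (fun e : entry => e.2 \in e.1) h.
Definition coll := {ffun Agent -> chist}.
Definition coll_empty : coll := [ffun => [::]].
Definition menufun := coll -> Agent -> {set O}.
Definition last_entry (h : chist) : entry := last (set0, null) h.

Definition is_PAO (S : menufun) : Prop :=
  (forall i, S coll_empty i != set0) /\
  (forall h : coll, (forall i, chist_valid (h i)) -> h != coll_empty ->
     forall i, h i != [::] ->
       S h i \subset (last_entry (h i)).1 :\ (last_entry (h i)).2).

Definition strategy := chist -> {set O} -> O.
Definition is_strategy (s : strategy) : Prop :=
  forall h W, W != set0 -> s h W \in W.

Definition all_empty (S : menufun) (h : coll) : bool := [forall i, S h i == set0].

Definition step (S : menufun) (sig : Agent -> strategy) (h : coll) : coll :=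
  [ffun i => if S h i == set0 then h i
             else rcons (h i) (S h i, sig i (h i) (S h i))].

Fixpoint run (S : menufun) (sig : Agent -> strategy) (n : nat) (h : coll) : coll :=
  match n with
  | 0 => h
  | n'.+1 => if all_empty S h then h else run S sig n' (step S sig h)
  end.

(* Enough periods: every agent chooses at most #|O| times (menus strictly shrink). *)
Definition fuel : nat := (#|Agent| * #|{: option Obj}|).+1.

Definition outcome (S : menufun) (sig : Agent -> strategy) (h : coll) : allocation :=
  fun i => (last_entry (run S sig fuel h i)).2.

Inductive reachable (S : menufun) : coll -> Prop :=
| reach0 : reachable S coll_empty
| reachS (h : coll) (c : Agent -> O) :
    reachable S h -> ~~ all_empty S h ->
    (forall i, S h i != set0 -> c i \in S h i) ->
    reachable S [ffun i => if S h i == set0 then h i else rcons (h i) (S h i, c i)].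

(* P-best element of a menu (null if the menu is empty, irrelevant). *)
Definition best (p : pref) (W : {set O}) : O :=
  odflt null [pick x in W | [forall y in W, (y == x) || prel p x y]].
Definition straightforward (p : pref) : strategy := fun _ W => best p W.

Definition sequentializes (S : menufun) (phi : rule) : Prop :=
  forall (P : profile) (i : Agent),
    outcome S (fun a => straightforward (P a)) coll_empty i = phi P i.

Definition typestrat := Agent -> pref -> strategy.

Definition perfect_ex_post (S : menufun) (Sig : typestrat) : Prop :=
  forall (a : Agent) (h : coll), reachable S h ->
  forall s' : strategy, is_strategy s' ->
  forall P : profile,
    weak (P a) (outcome S (fun b => Sig b (P b)) h a)
               (outcome S (fun b => if b == a then s' else Sig b (P b)) h a).

Definition pao_implementable (phi : rule) : Prop :=
  exists S : menufun, is_PAO S /\ sequentializes S phi /\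
    perfect_ex_post S (fun _ => straightforward).

End Model.

(* Main.v *)
Require Import Defs.
From mathcomp Require Import all_boot zify.
From Stdlib Require Import ClassicalDescription FunctionalExtensionality Classical.
Set Implicit Arguments. Unset Strict Implicit. Unset Printing Implicit Defensive.

Section Prefs.
Variable Obj : finType.
Local Notation O := (option Obj).
Implicit Types (p q : pref Obj) (W : {set O}) (x y z w : O).

Lemma pref_props p : strict_pref (prel p).
Proof. exact: (proj2_sig p). Qed.

Lemma prel_irr p x : prel p x x = false.
Proof. by have [irr _] := pref_props p; apply: irr. Qed.

Lemma prel_trans p : transitive (prel p).
Proof. by have [_ [tr _]] := pref_props p. Qed.

Lemma prel_total p x y : x != y -> prel p x y || prel p y x.
Proof. by have [_ [_ tot]] := pref_props p; apply: tot. Qed.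

Lemma prel_asym p x y : prel p x y -> prel p y x = false.
Proof.
move=> hxy; apply/negP => hyx.
by have := prel_trans hxy hyx; rewrite prel_irr.
Qed.

Lemma weak_refl p x : weak p x x.
Proof. by rewrite /weak eqxx. Qed.

Lemma exists_max p (s : seq O) : s != [::] ->
  exists2 x, x \in s & forall y, y \in s -> (y == x) || prel p x y.
Proof.
elim: s => // a s IH _.
case: (altP (s =P [::])) => [->|sn].
  by exists a; rewrite ?mem_seq1 // => y; rewrite mem_seq1 => ->.
have [x xs hx] := IH sn.
case: (altP (a =P x)) => [ax|nax].
  exists x; first by rewrite inE xs orbT.
  by move=> y; rewrite inE => /orP[/eqP->|/hx]; rewrite ?ax ?eqxx.
case/orP: (prel_total p nax) => hax.
  exists a; first by rewrite inE eqxx.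
  move=> y; rewrite inE => /orP[/eqP->|ys]; first by rewrite eqxx.
  case/orP: (hx y ys) => [/eqP->|hxy]; first by rewrite hax orbT.
  by rewrite (prel_trans hax hxy) orbT.
exists x; first by rewrite inE xs orbT.
move=> y; rewrite inE => /orP[/eqP->|ys]; first by rewrite hax orbT.
exact: hx.
Qed.

Lemma bestP p W : W != set0 ->
  best p W \in W /\ forall y, y \in W -> y != best p W -> prel p (best p W) y.
Proof.
move=> W0.
have [x xW hx] : exists2 x, x \in enum W & forall y, y \in enum W -> (y == x) || prel p x y.
  apply: exists_max; case/set0Pn: W0 => z zW.
  by apply/eqP => e; have := mem_enum W z; rewrite e zW.
rewrite /best; case: pickP => [b /andP[bW /forallP hb]|none].
  split=> // y yW nyb; have := hb y; rewrite yW /= => /orP[] //.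
  by move=> e; rewrite e in nyb.
have := none x; rewrite -(mem_enum W) xW /=; move/negP; case.
apply/forallP => y; apply/implyP => yW; apply: hx; by rewrite mem_enum.
Qed.

Lemma best_in p W : W != set0 -> best p W \in W.
Proof. by move=> W0; case: (bestP p W0). Qed.

Lemma best_max p W y : W != set0 -> y \in W -> y != best p W -> prel p (best p W) y.
Proof. by move=> W0; case: (bestP p W0) => _ h; apply: h. Qed.

Lemma best_eq p W x : x \in W -> (forall y, y \in W -> y != x -> prel p x y) -> best p W = x.
Proof.
move=> xW hx.
have W0 : W != set0 by apply/set0Pn; exists x.
have bW := best_in p W0.
case: (altP (best p W =P x)) => // nb.
have h1 : prel p (best p W) x by apply: best_max => //; rewrite eq_sym.
have h2 := hx _ bW nb.
by have := prel_asym h1; rewrite h2.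
Qed.

Lemma best_set0 p : best p set0 = None.
Proof. by rewrite /best; case: pickP => // x; rewrite in_set0. Qed.

Definition toprel (w : O) p : rel O :=
  fun x y => (x != y) && ((x == w) || ((y != w) && prel p x y)).

Lemma top_strict w p : strict_pref (toprel w p).
Proof.
split; first by move=> x; rewrite /toprel eqxx.
split.
  move=> y x z; rewrite /toprel => /andP[nxy hxy] /andP[nyz hyz].
  case: (altP (x =P z)) => [exz|nxz] /=.
    subst z; case/orP: hxy => [/eqP exw|/andP[nyw pxy]].
      subst x; move: hyz; rewrite eq_sym (negbTE nxy) eqxx /=.
      by [].
    case/orP: hyz => [/eqP eyw|/andP[nxw pyx]]; first by rewrite eyw eqxx in nyw.
    by have := prel_asym pxy; rewrite pyx.
  case/orP: hxy => [->//|/andP[nyw pxy]].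
  case/orP: hyz => [/eqP eyw|/andP[nzw pyz]]; first by rewrite eyw eqxx in nyw.
  by rewrite nzw (prel_trans pxy pyz) orbT.
move=> x y nxy; have ht := prel_total p nxy.
have nyx : y != x by rewrite eq_sym.
rewrite /toprel; move: nxy nyx ht.
case: (x =P y) => // _ _; case: (y =P x) => // _ _ /=.
by case: (x =P w) => //= _; case: (y =P w) => //= _.
Qed.

Definition top (w : O) p : pref Obj := exist _ (toprel w p) (top_strict w p).

Lemma prel_top w p x y : prel (top w p) x y = toprel w p x y.
Proof. by []. Qed.

Lemma best_top_in w p W : w \in W -> best (top w p) W = w.
Proof.
move=> wW; apply: best_eq => // y yW nyw.
by rewrite prel_top /toprel eq_sym nyw eqxx.
Qed.

Lemma best_top_notin w p W : w \notin W -> best (top w p) W = best p W.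
Proof.
move=> wW; case: (altP (W =P set0)) => [->|W0]; first by rewrite !best_set0.
apply: best_eq; first exact: best_in.
move=> y yW nyb; rewrite prel_top /toprel eq_sym nyb /=.
have -> : (best p W == w) = false.
  by apply/negP => /eqP e; rewrite -e (best_in p W0) in wW.
have -> : (y != w) by apply/negP => /eqP e; rewrite -e yW in wW.
by rewrite /= best_max.
Qed.

Lemma prel_top_off w p x y : x != w -> y != w -> prel (top w p) x y = prel p x y.
Proof.
move=> nxw nyw; rewrite prel_top /toprel (negbTE nxw) nyw /=.
case: (altP (x =P y)) => [->|//]; by rewrite prel_irr.
Qed.

End Prefs.
Section Hist.
Variable Obj : finType.
Local Notation O := (option Obj).
Fixpoint good (hb : chist Obj) : bool :=
  if hb is e :: r then [&& e.2 \in e.1, all (fun e' : entry Obj => e'.1 \subset e.1 :\ e.2) r & good r]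
  else true.

Lemma last_entry_cons (e : entry Obj) r : r != [::] -> last_entry (e :: r) = last_entry r.
Proof. by case: r. Qed.

Lemma last_entry_in (hb : chist Obj) : hb != [::] -> last_entry hb \in hb.
Proof. case: hb => // e r _; rewrite /last_entry /=; exact: mem_last. Qed.

Lemma last_entry_rcons (hb : chist Obj) e : last_entry (rcons hb e) = e.
Proof. by rewrite /last_entry last_rcons. Qed.

Lemma good_valid (hb : chist Obj) e : good hb -> e \in hb -> e.2 \in e.1.
Proof.
elim: hb => // e0 r IH /= /and3P[h0 _ gr]; rewrite inE => /orP[/eqP->//|er].
exact: IH.
Qed.

Lemma good_rcons (hb : chist Obj) (e : entry Obj) : good hb -> e.2 \in e.1 ->
  (hb != [::] -> e.1 \subset (last_entry hb).1 :\ (last_entry hb).2) -> good (rcons hb e).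
Proof.
elim: hb => [|e0 r IH] /=; first by move=> _ ->.
move=> /and3P[h0 ar gr] he hsub; rewrite h0 /=.
have hs := hsub isT.
case: (altP (r =P [::])) => [rn|rn].
  by subst r; move: hs; rewrite /last_entry /= he !andbT.
rewrite last_entry_cons // in hs.
have gr' : good (rcons r e) by apply: IH.
rewrite all_rcons ar gr' !andbT /=.
have hl := last_entry_in rn.
have := allP ar _ hl => hl2.
apply: (subset_trans hs); apply: (subset_trans _ hl2).
by apply/subsetP => x; rewrite in_setD1 => /andP[].
Qed.

Lemma good_cat (s1 s2 : chist Obj) e e' : good (s1 ++ s2) -> e \in s1 -> e' \in s2 ->
  e'.1 \subset e.1 :\ e.2.
Proof.
elim: s1 => // e0 r IH /= /and3P[h0 ar gr]; rewrite inE => /orP[/eqP->|er] he'.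
  by apply: (allP ar); rewrite mem_cat he' orbT.
exact: IH.
Qed.

Lemma good_avoid (hb : chist Obj) e : good hb -> hb != [::] -> e \in hb ->
  e.2 \notin ((last_entry hb).1 :\ (last_entry hb).2).
Proof.
elim: hb => // e0 r IH /= /and3P[h0 ar gr] _.
case: (altP (r =P [::])) => [->|rn].
  by rewrite mem_seq1 => /eqP ->; rewrite /last_entry /= in_setD1 eqxx.
rewrite last_entry_cons // inE => /orP[/eqP ->|er]; last exact: IH.
have hl := allP ar _ (last_entry_in rn).
apply/negP; rewrite in_setD1 => /andP[_ /(subsetP hl)]; by rewrite in_setD1 eqxx.
Qed.
End Hist.
Section Lift.
Variable Obj : finType.
Local Notation O := (option Obj).

Definition lift (hb : chist Obj) (p : pref Obj) : pref Obj :=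
  foldr (fun (e : entry Obj) q => top e.2 q) p hb.

Definition consh (hb : chist Obj) (p : pref Obj) : Prop :=
  forall e, e \in hb -> best p e.1 = e.2.


Lemma best_lift_off hb p (W : {set O}) :
  (forall e, e \in hb -> e.2 \notin W) -> best (lift hb p) W = best p W.
Proof.
elim: hb => //= e0 r IH h.
rewrite best_top_notin; last by apply: h; rewrite inE eqxx.
by apply: IH => e er; apply: h; rewrite inE er orbT.
Qed.

Lemma lift_consh hb p : good hb -> consh hb (lift hb p).
Proof.
elim: hb => [|e0 r IH] /=; first by move=> _ e.
case/and3P => h0 ar gr e; rewrite inE => /orP[/eqP->|er].
  exact: best_top_in.
rewrite best_top_notin; first exact: IH.
have := allP ar _ er => hs; apply/negP => /(subsetP hs); by rewrite in_setD1 eqxx.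
Qed.

Lemma prel_lift_off hb p x y : x \notin map snd hb -> y \notin map snd hb ->
  prel (lift hb p) x y = prel p x y.
Proof.
elim: hb => //= e0 r IH; rewrite !inE !negb_or => /andP[nx xr] /andP[ny yr].
by rewrite -prel_top prel_top_off // IH.
Qed.

Lemma weak_lift_off hb p x y : x \notin map snd hb -> y \notin map snd hb ->
  weak (lift hb p) x y -> weak p x y.
Proof. by move=> hx hy; rewrite /weak prel_lift_off. Qed.
End Lift.
Section Mech.
Variables Agent Obj : finType.
Local Notation O := (option Obj).
Local Notation coll := (coll Agent Obj).
Local Notation profile := (profile Agent Obj).
Local Notation cempty := (coll_empty Agent Obj).
Variable S : menufun Agent Obj.
Hypothesis SPAO : is_PAO S.

Definition vsig (sig : Agent -> strategy Obj) :=
  forall b hb (W : {set O}), W != set0 -> sig b hb W \in W.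

Definition sf (P : profile) : Agent -> strategy Obj := fun b => straightforward (P b).

Lemma vsig_sf P : vsig (sf P).
Proof. by move=> b hb W W0; rewrite /sf /straightforward best_in. Qed.

Definition stepc (g : coll) (c : Agent -> O) : coll :=
  [ffun i => if S g i == set0 then g i else rcons (g i) (S g i, c i)].

Lemma step_stepc sig g : step S sig g = stepc g (fun i => sig i (g i) (S g i)).
Proof. by []. Qed.

Definition fmu (hb : chist Obj) : nat :=
  if hb is [::] then #|{: O}| else #|(last_entry hb).1|.-1.

Definition mu (g : coll) : nat := \sum_(b : Agent) fmu (g b).

Lemma good_chist_valid (hb : chist Obj) : good hb -> chist_valid hb.
Proof. move=> g; apply/allP => e he; exact: good_valid g he. Qed.

Lemma coll_ne (g : coll) b : g b != [::] -> g != cempty.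
Proof. by move=> hb; apply/eqP => e; rewrite e /coll_empty ffunE eqxx in hb. Qed.

Lemma reach_good g : reachable S g -> forall b, good (g b).
Proof.
elim=> [|h c rh IH ne hc] b; first by rewrite /coll_empty ffunE.
rewrite ffunE; case: ifP => // hS.
apply: good_rcons => //=; first by apply: hc; rewrite hS.
move=> hn; case: SPAO => _ H; apply: H => //.
  by move=> i; apply: good_chist_valid.
exact: coll_ne hn.
Qed.

Lemma menu_sub g b : reachable S g -> g b != [::] ->
  S g b \subset (last_entry (g b)).1 :\ (last_entry (g b)).2.
Proof.
move=> rg hn; case: SPAO => _ H; apply: H => //.
  by move=> i; apply: good_chist_valid; apply: reach_good.
exact: coll_ne hn.
Qed.

Lemma reach_step sig g : reachable S g -> ~~ all_empty S g -> vsig sig ->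
  reachable S (step S sig g).
Proof.
move=> rg ne vs; rewrite step_stepc /stepc; apply: reachS => // i hi; exact: vs.
Qed.

Lemma fmu_rcons (hb : chist Obj) e : fmu (rcons hb e) = #|e.1|.-1.
Proof. by rewrite /fmu last_entry_rcons; case: hb. Qed.

Lemma mu_dec g c : reachable S g -> ~~ all_empty S g ->
  (forall i, S g i != set0 -> c i \in S g i) -> mu (stepc g c) < mu g.
Proof.
move=> rg ne hc.
have pw : forall i, fmu (stepc g c i) <= fmu (g i) /\ (S g i != set0 -> fmu (stepc g c i) < fmu (g i)).
  move=> i; rewrite /stepc ffunE; case: ifP => [_|hS]; first by split.
  rewrite fmu_rcons /=.
  have h0 : 0 < #|S g i| by rewrite card_gt0 hS.
  case: (altP (g i =P [::])) => [->|hn].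
    have hmax : #|S g i| <= fmu [::] by exact: max_card.
    set k := #|S g i| in h0 hmax *; set n := fmu [::] in hmax *.
    by split => [|_]; lia.
  have hs := menu_sub rg hn.
  have hv : (last_entry (g i)).2 \in (last_entry (g i)).1.
    exact: good_valid (reach_good rg i) (last_entry_in hn).
  have hle := subset_leq_card hs.
  have hc1 := cardsD1 (last_entry (g i)).2 (last_entry (g i)).1; rewrite hv in hc1.
  have hf : fmu (g i) = #|(last_entry (g i)).1|.-1 by rewrite /fmu; case: (g i) hn.
  rewrite hf.
  set k := #|S g i| in h0 hle *; set n := #|_ :\ _| in hle hc1.
  set m := #|(last_entry (g i)).1| in hc1 *.
  by split => [|_]; lia.
move: ne; rewrite /all_empty negb_forall => /existsP[i0 hi0].
rewrite /mu (bigD1 i0) //= [X in _ < X](bigD1 i0) //=.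
have h1 := pw i0.
have h2 : \sum_(i | i != i0) fmu (stepc g c i) <= \sum_(i | i != i0) fmu (g i).
  by apply: leq_sum => i _; case: (pw i).
case: h1 => _ /(_ hi0) h1.
lia.
Qed.

Lemma reach_run_closed sig n g : reachable S g -> vsig sig -> reachable S (run S sig n g).
Proof.
elim: n g => //= n IH g rg vs; case: ifP => // ne.
by apply: IH => //; apply: reach_step => //; rewrite ne.
Qed.

Lemma run_prefix sig n g b : exists ext, run S sig n g b = g b ++ ext.
Proof.
elim: n g => /= [|n IH] g; first by exists [::]; rewrite cats0.
case: ifP => _; first by exists [::]; rewrite cats0.
have [ext ->] := IH (step S sig g).
rewrite /step ffunE; case: ifP => _; first by exists ext.
by exists ((S g b, sig b (g b) (S g b)) :: ext); rewrite cat_rcons.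
Qed.

Lemma stab sig n1 n2 g : reachable S g -> vsig sig -> mu g < n1 -> mu g < n2 ->
  run S sig n1 g = run S sig n2 g.
Proof.
elim: n1 n2 g => [|n1 IH] [|n2] g //= rg vs h1 h2.
case: ifP => // ne; apply: IH => //.
- by apply: reach_step => //; rewrite ne.
- have := mu_dec (c := fun i => sig i (g i) (S g i)) rg (negbT ne) (fun i hi => vs _ _ _ hi).
  rewrite -step_stepc; lia.
- have := mu_dec (c := fun i => sig i (g i) (S g i)) rg (negbT ne) (fun i hi => vs _ _ _ hi).
  rewrite -step_stepc; lia.
Qed.

Lemma run_all_empty sig n g : reachable S g -> vsig sig -> mu g < n ->
  all_empty S (run S sig n g).
Proof.
elim: n g => [|n IH] g //= rg vs h; case: ifP => // ne; apply: IH => //.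
- by apply: reach_step => //; rewrite ne.
- have := mu_dec (c := fun i => sig i (g i) (S g i)) rg (negbT ne) (fun i hi => vs _ _ _ hi).
  rewrite -step_stepc; lia.
Qed.

Lemma mu_empty : mu cempty < fuel Agent Obj.
Proof.
rewrite /mu /fuel.
have -> : \sum_(b : Agent) fmu (cempty b) = \sum_(b : Agent) #|{: O}|.
  by apply: eq_bigr => b _; rewrite /coll_empty ffunE.
by rewrite sum_nat_const.
Qed.

Definition consc (h : coll) (Q : profile) := forall b, consh (h b) (Q b).

Lemma reach_run h : reachable S h -> exists k, k + mu h <= mu cempty /\
  forall Q, consc h Q -> forall n, run S (sf Q) (k + n) cempty = run S (sf Q) n h.
Proof.
elim=> [|g c rg [k [hk IH]] ne hc].
  by exists 0; split => // Q _ n.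
set h' := [ffun i => _].
have hmu : mu h' < mu g by apply: (mu_dec (c := c)).
exists k.+1; split; first lia.
move=> Q hQ n.
have hQ' : consc g Q.
  move=> b e he; apply: hQ; rewrite /h' ffunE; case: ifP => // _.
  by rewrite mem_rcons inE he orbT.
rewrite addSnnS IH //= (negbTE ne).
congr run; apply/ffunP => i; rewrite !ffunE; case: ifP => // hS.
congr rcons; congr pair.
have := hQ i (S g i, c i); rewrite /h' ffunE hS mem_rcons inE eqxx => /(_ isT) /=.
by rewrite /sf /straightforward.
Qed.

Lemma outcome_phi (phi : rule Agent Obj) h Q : sequentializes S phi -> reachable S h ->
  consc h Q -> forall i, outcome S (sf Q) h i = phi Q i.
Proof.
move=> sq rh hQ i; rewrite -sq.
have [k [hk hr]] := reach_run rh.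
have hf := mu_empty.
have e : run S (sf Q) (fuel Agent Obj) cempty = run S (sf Q) (fuel Agent Obj) h.
  have -> : fuel Agent Obj = k + (fuel Agent Obj - k) by lia.
  rewrite hr //; apply: stab => //; first exact: vsig_sf.
    lia.
  lia.
by rewrite /outcome -e.
Qed.

Lemma run_ext (Inv : coll -> Prop) sig1 sig2 :
  (forall g, Inv g -> ~~ all_empty S g -> Inv (step S sig1 g) /\ step S sig1 g = step S sig2 g) ->
  forall n g, Inv g -> run S sig1 n g = run S sig2 n g.
Proof.
move=> H; elim=> [|n IH] g //= ig; case: ifP => // ne.
have [i1 e] := H g ig (negbT ne); rewrite -e; exact: IH.
Qed.

Lemma step_agree g sig1 sig2 :
  (forall b, S g b != set0 -> sig1 b (g b) (S g b) = sig2 b (g b) (S g b)) ->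
  step S sig1 g = step S sig2 g.
Proof.
move=> H; apply/ffunP => b; rewrite !ffunE; case: ifP => // hS.
by rewrite H // hS.
Qed.

Lemma run_same_a a sig1 sig2 : (forall b, b != a -> sig1 b = sig2 b) ->
  forall n g, run S sig1 n g a = g a -> run S sig2 n g = run S sig1 n g.
Proof.
move=> H; elim=> [|n IH] g //=; case: ifP => // ne ha.
have hS : S g a == set0.
  apply/negPn/negP => hS; have [ext e] := run_prefix sig1 n (step S sig1 g) a.
  move: ha; rewrite e /step ffunE (negbTE hS) => /(f_equal size).
  by rewrite size_cat size_rcons; lia.
have es : step S sig2 g = step S sig1 g.
  apply: step_agree => b hb; case: (altP (b =P a)) => [eb|nb].
    by rewrite eb hS in hb.
  by rewrite H.
rewrite es; apply: IH; by rewrite ha /step ffunE hS.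
Qed.

Lemma ext_notin (s1 s2 : chist Obj) : good (s1 ++ s2) -> s2 != [::] ->
  (last_entry (s1 ++ s2)).2 \notin map snd s1.
Proof.
move=> g n.
have hl : last_entry (s1 ++ s2) \in s2.
  rewrite /last_entry last_cat; case: (s2) n => // a r _ /=; exact: mem_last.
have hv : (last_entry (s1 ++ s2)).2 \in (last_entry (s1 ++ s2)).1.
  by apply: good_valid g _; rewrite mem_cat hl orbT.
apply/mapP => [[e he ee]].
have := good_cat g he hl => /subsetP /(_ _ hv); by rewrite in_setD1 ee eqxx.
Qed.

Lemma avoid_h (h g : coll) b : reachable S g -> (forall e, e \in h b -> e \in g b) ->
  S g b != set0 -> forall e, e \in h b -> e.2 \notin S g b.
Proof.
move=> rg hsub hS e he.
have hn : g b != [::] by apply/eqP => e0; have := hsub e he; rewrite e0.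
have hs := menu_sub rg hn.
have := good_avoid (reach_good rg b) hn (hsub e he).
by apply: contra => /(subsetP hs).
Qed.

Lemma mem_step sig (g : coll) b (e : entry Obj) : e \in g b -> e \in step S sig g b.
Proof. by move=> he; rewrite /step ffunE; case: ifP => // _; rewrite mem_rcons inE he orbT. Qed.

Lemma pepe (phi : rule Agent Obj) : sequentializes S phi -> strategy_proof phi ->
  perfect_ex_post S (fun _ => @straightforward Obj).
Proof.
move=> sq sp a h rh s' vs' P.
set dev := fun b => if b == a then s' else straightforward (P b).
change (weak (P a) (outcome S (sf P) h a) (outcome S dev h a)).
have vdev : vsig dev.
  by move=> b hb W W0; rewrite /dev; case: ifP => _; [exact: vs' | exact: best_in].
set Pt : profile := fun b => lift (h b) (P b).
set Dh := run S dev (fuel Agent Obj) h.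
set Ph := upd Pt a (lift (Dh a) (P a)).
have rD : reachable S Dh by apply: reach_run_closed.
have mh : mu h < fuel Agent Obj.
  have [k [hk _]] := reach_run rh; have := mu_empty; lia.
have agreeP : forall g b, reachable S g -> (forall e, e \in h b -> e \in g b) -> S g b != set0 ->
    best (P b) (S g b) = best (Pt b) (S g b).
  move=> g b rg hsub hS; rewrite /Pt best_lift_off //; exact: avoid_h.
have C1 : run S (sf P) (fuel Agent Obj) h = run S (sf Pt) (fuel Agent Obj) h.
  apply: (run_ext (Inv := fun g => reachable S g /\ forall b e, e \in h b -> e \in g b)); last by split.
  move=> g [rg hsub] ne; split.
    split; first by apply: reach_step => //; exact: vsig_sf.
    by move=> b e he; apply: mem_step; apply: hsub.
  by apply: step_agree => b hS; rewrite /sf /straightforward; apply: agreeP => //; apply: hsub.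
have C2 : outcome S (sf Pt) h a = phi Pt a.
  apply: outcome_phi => // b; exact: lift_consh (reach_good rh b).
have hDstep : forall g, reachable S g -> ~~ all_empty S g ->
    (forall N, mu g < N -> run S dev N g = Dh) ->
    forall N, mu (step S dev g) < N -> run S dev N (step S dev g) = Dh.
  move=> g rg ne hg N hN.
  have rg' : reachable S (step S dev g) by apply: reach_step.
  rewrite (stab (n2 := (N + mu g)) rg' vdev hN); last lia.
  rewrite -(hg (N + mu g).+1); last lia.
  by rewrite /= (negbTE ne).
have C3 : run S dev (fuel Agent Obj) h = run S (sf Ph) (fuel Agent Obj) h.
  apply: (run_ext (Inv := fun g => [/\ reachable S g, forall b e, e \in h b -> e \in g b &
             forall N, mu g < N -> run S dev N g = Dh])).
  - move=> g [rg hsub hg] ne; split.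
      split; first by apply: reach_step.
        by move=> b e he; apply: mem_step; apply: hsub.
      exact: hDstep.
    apply: step_agree => b hS; rewrite /dev /sf /Ph /upd.
    case: (altP (b =P a)) => [eb|nb].
      subst b; rewrite /straightforward.
      have hin : (S g a, s' (g a) (S g a)) \in Dh a.
        rewrite -(hDstep g rg ne hg (mu g)) ?(mu_dec rg ne) //; last first.
          by move=> i hi; apply: vdev.
        have [ext ->] := run_prefix dev (mu g) (step S dev g) a.
        by rewrite mem_cat /step ffunE (negbTE hS) mem_rcons inE /dev !eqxx.
      by rewrite (lift_consh _ (reach_good rD a) hin).
    by rewrite /straightforward; apply: agreeP => //; apply: hsub.
  - split; [exact: rh | by [] | ].
    by move=> N hN; apply: stab.
have C4 : outcome S (sf Ph) h a = phi Ph a.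
  apply: outcome_phi => // b e he; rewrite /Ph /upd.
  case: (altP (b =P a)) => [eb|nb].
    subst b; apply: (lift_consh _ (reach_good rD a)).
    by have [ext ->] := run_prefix dev (fuel Agent Obj) h a; rewrite mem_cat he.
  exact: (lift_consh _ (reach_good rh b) he).
have SPa := sp Pt a (lift (Dh a) (P a)).
rewrite -/Ph -C2 -C4 in SPa.
have E1 : outcome S (sf P) h a = outcome S (sf Pt) h a by rewrite /outcome C1.
have E2 : outcome S dev h a = outcome S (sf Ph) h a by rewrite /outcome C3.
rewrite -E1 -E2 in SPa.
set T := run S (sf P) (fuel Agent Obj) h.
case: (altP (T a =P h a)) => [eT|nT].
  have := run_same_a (sig1 := sf P) (sig2 := dev) (a := a).
  move=> /(_ _ (fuel Agent Obj) h eT) => e.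
  rewrite /outcome e; first exact: weak_refl.
  by move=> b nb; rewrite /dev (negbTE nb).
case: (altP (Dh a =P h a)) => [eD|nD].
  have := run_same_a (sig1 := dev) (sig2 := sf P) (a := a).
  move=> /(_ _ (fuel Agent Obj) h eD) => e.
  have e' : T = Dh by apply: e => b nb; rewrite /dev (negbTE nb).
  by rewrite e' eD eqxx in nT.
have rT : reachable S T by apply: reach_run_closed => //; exact: vsig_sf.
have nx : outcome S (sf P) h a \notin map snd (h a).
  rewrite /outcome -/T; have [ext e] := run_prefix (sf P) (fuel Agent Obj) h a.
  rewrite -/T in e; rewrite e; apply: ext_notin; first by rewrite -e; exact: reach_good.
  by apply/eqP => e0; rewrite e e0 cats0 eqxx in nT.
have ny : outcome S dev h a \notin map snd (h a).
  rewrite /outcome -/Dh; have [ext e] := run_prefix dev (fuel Agent Obj) h a.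
  rewrite -/Dh in e; rewrite e; apply: ext_notin; first by rewrite -e; exact: reach_good.
  by apply/eqP => e0; rewrite e e0 cats0 eqxx in nD.
apply: (weak_lift_off nx ny).
exact: SPa.
Qed.

Lemma agree_best (P P' : profile) (al : allocation Agent Obj) a (W : {set O}) :
  Lset P al P' -> (exists2 u, u \in W & weak (P a) u (al a)) ->
  best (P' a) W = best (P a) W.
Proof.
move=> L [u uW hu].
have W0 : W != set0 by apply/set0Pn; exists u.
set b := best (P a) W.
have bW : b \in W by apply: best_in.
have hb : weak (P a) b (al a).
  case: (altP (u =P b)) => [<-//|nub].
  have pbu := best_max (p := P a) W0 uW nub.
  move: hu; rewrite /weak => /orP[/eqP <-|pu]; first by rewrite pbu orbT.
  by rewrite (prel_trans pbu pu) orbT.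
have [A1 A2] := L a; set o := al a in hb A1 A2.
apply: best_eq => // y yW nyb.
have pby : prel (P a) b y by apply: best_max.
case/orP: hb => [/eqP ebo|pbo].
  rewrite ebo in pby *.
  have nyo : y != o by rewrite -ebo.
  have : ~~ prel (P' a) y o by rewrite A1 prel_asym.
  by have := prel_total (P' a) nyo => /orP[->//|->].
have pbo' : prel (P' a) b o by rewrite A1.
case: (altP (y =P o)) => [->//|nyo].
case hyo : (prel (P a) y o); first by rewrite A2.
have : ~~ prel (P' a) y o by rewrite A1 hyo.
have := prel_total (P' a) nyo => /orP[->//|poy] _.
exact: prel_trans pbo' poy.
Qed.

Definition inv (P : profile) (al : allocation Agent Obj) a (g : coll) :=
  g a != [::] /\ forall x, x \in (last_entry (g a)).1 -> ~~ weak (P a) x (al a).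

Lemma inv_run P al a sig n g : reachable S g -> vsig sig -> inv P al a g ->
  inv P al a (run S sig n g).
Proof.
elim: n g => [|n IH] g //= rg vs ig; case: ifP => // ne.
apply: IH => //; first by apply: reach_step => //; rewrite ne.
rewrite /inv /step ffunE; case: ifP => //= hS.
rewrite last_entry_rcons /=; split; first by case: (g a).
move=> x hx; case: ig => hn hi; apply: hi.
by have := subsetP (menu_sub rg hn) x hx; rewrite in_setD1 => /andP[].
Qed.

Lemma md_main P al : forall n g, reachable S g ->
  (forall P', Lset P al P' -> run S (sf P') n g = run S (sf P) n g) \/
  exists a, forall P', Lset P al P' -> inv P al a (run S (sf P') n g).
Proof.
elim=> [|n IH] g rg; first by left.
case ne : (all_empty S g); first by left => P' _ /=; rewrite ne.
case: (classic (exists a, S g a != set0 /\ forall x, x \in S g a -> ~~ weak (P a) x (al a))).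
  move=> [a [hS hx]]; right; exists a => P' L /=; rewrite ne.
  apply: inv_run; first by apply: reach_step => //; [rewrite ne | exact: vsig_sf].
    exact: vsig_sf.
  rewrite /inv /step ffunE (negbTE hS) last_entry_rcons /=.
  by split; [case: (g a) | ].
move=> hno.
have es : forall P', Lset P al P' -> step S (sf P') g = step S (sf P) g.
  move=> P' L; apply: step_agree => b hS; rewrite /sf /straightforward.
  apply: agree_best => //.
  apply: NNPP => hn; apply: hno; exists b; split => // x hx.
  by apply/negP => hw; apply: hn; exists x.
have rg' : reachable S (step S (sf P) g) by apply: reach_step => //; [rewrite ne | exact: vsig_sf].
case: (IH _ rg') => [hl|[a hr]].
  by left => P' L /=; rewrite ne es // hl.
by right; exists a => P' L /=; rewrite ne es //; apply: hr.
Qed.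

Lemma md_of_seq (phi : rule Agent Obj) : sequentializes S phi -> monotonic_discoverability phi.
Proof.
move=> sq al P.
case: (classic (forall a, phi P a = al a)) => [h|h]; first by left.
right.
case: (md_main P al (fuel Agent Obj) (reach0 S)) => [hl|[a hr]].
  have [a ha] := not_all_ex_not _ _ h.
  exists a => P' L.
  have -> : phi P' a = phi P a.
    rewrite -sq -(sq P) /outcome.
    by have := hl P' L; rewrite /sf => ->.
  exact: ha.
exists a => P' L; rewrite -sq /outcome.
have [hn hi] := hr P' L.
set g := run S _ _ _ in hn hi *.
have rg : reachable S g by apply: reach_run_closed; [exact: reach0 | exact: vsig_sf].
have hv : (last_entry (g a)).2 \in (last_entry (g a)).1.
  exact: good_valid (reach_good rg a) (last_entry_in hn).
move=> e; have := hi _ hv; by rewrite e weak_refl.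
Qed.
End Mech.

Section Constr.
Variables Agent Obj : finType.
Local Notation O := (option Obj).
Local Notation coll := (coll Agent Obj).
Local Notation profile := (profile Agent Obj).
Local Notation cempty := (coll_empty Agent Obj).

Inductive mh : chist Obj -> Prop :=
| mh1 w : mh [:: (setT, w)]
| mhS hb w : mh hb -> (last_entry hb).1 :\ (last_entry hb).2 != set0 ->
    mh (rcons hb ((last_entry hb).1 :\ (last_entry hb).2, w)).

Lemma mh_ne hb : mh hb -> hb != [::].
Proof. by case=> // hb' w _ _; case: hb'. Qed.

Lemma consh_rcons (hb : chist Obj) (e : entry Obj) (p : pref Obj) : consh (rcons hb e) p -> consh hb p /\ best p e.1 = e.2.
Proof.
move=> h; split; first by move=> e' he'; apply: h; rewrite mem_rcons inE he' orbT.
by apply: h; rewrite mem_rcons inE eqxx.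
Qed.

Lemma mhA (p : pref Obj) hb : mh hb -> consh hb p -> forall x, prel p x (last_entry hb).2 = (x \notin (last_entry hb).1).
Proof.
elim=> [w|hb' w mh' IH W0] hc x.
  have e : best p setT = w := hc (setT, w) (mem_head _ _).
  rewrite /last_entry /= in_setT /=.
  case: (altP (x =P w)) => [->|nxw]; first by rewrite prel_irr.
  apply: prel_asym; rewrite -e; apply: best_max; last by rewrite e.
    by apply/set0Pn; exists x; rewrite in_setT.
  by rewrite in_setT.
have [hc' ew] := consh_rcons hc.
rewrite last_entry_rcons /=; rewrite /= in ew.
set W := (last_entry hb').1 in W0 ew IH *; set w0 := (last_entry hb').2 in W0 ew IH *.
have hn := mh_ne mh'.
have ew0 : best p W = w0 by apply: hc'; exact: last_entry_in.
have wW : w \in W :\ w0 by rewrite -ew best_in.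
have w0W : w0 \in W by rewrite -ew0 best_in //; apply/set0Pn; exists w; move: wW; rewrite in_setD1 => /andP[].
have pw0w : prel p w0 w.
  rewrite -ew0; apply: best_max; first by apply/set0Pn; exists w0.
    by move: wW; rewrite in_setD1 => /andP[].
  by rewrite ew0; move: wW; rewrite in_setD1 => /andP[]; rewrite eq_sym.
case hx : (x \in W :\ w0) => /=.
  case: (altP (x =P w)) => [->|nxw]; first by rewrite prel_irr.
  apply: prel_asym; rewrite -ew; apply: best_max; rewrite ?ew //.
move/negbT: hx; rewrite in_setD1 negb_and negbK => /orP[/eqP->//|xW].
have := IH hc' x; rewrite -/W -/w0 (negbTE xW) => pxw0.
by rewrite (prel_trans pxw0 pw0w).
Qed.

Lemma mhB (p q : pref Obj) hb : mh hb -> consh hb p -> consh hb q ->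
  forall x y, prel p x (last_entry hb).2 -> prel p y (last_entry hb).2 -> prel q x y = prel p x y.
Proof.
move=> m; elim: m => [w|hb' w mh' IH W0] hp hq x y.
  by rewrite (mhA (mh1 w) hp) /last_entry /= in_setT.
have m' := mhS w mh' W0.
rewrite (mhA m' hp) (mhA m' hp) last_entry_rcons /=.
have [hp' _] := consh_rcons hp; have [hq' _] := consh_rcons hq.
set W := (last_entry hb').1 in W0 IH *; set w0 := (last_entry hb').2 in W0 IH *.
have Ap := mhA mh' hp'; have Aq := mhA mh' hq'.
rewrite -/W -/w0 in Ap Aq.
rewrite !in_setD1 !negb_and !negbK => /orP[/eqP->|xW] /orP[/eqP->|yW].
- by rewrite !prel_irr.
- have h1 : prel p y w0 by rewrite Ap.
  have h2 : prel q y w0 by rewrite Aq.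
  by rewrite (prel_asym h1) (prel_asym h2).
- by rewrite Ap Aq xW.
- by apply: IH => //; rewrite Ap.
Qed.

Lemma mh_agree (p q : pref Obj) hb : mh hb -> consh hb p -> consh hb q ->
  agrees_above p q (last_entry hb).2.
Proof.
move=> m hp hq; split; first by move=> x; rewrite (mhA m hp) (mhA m hq).
exact: mhB.
Qed.

Variable phi : rule Agent Obj.
Hypothesis MD : monotonic_discoverability phi.

Definition certP (g : coll) a : Prop :=
  g a != [::] /\ forall P', consc g P' -> phi P' a <> (last_entry (g a)).2.

Definition pdec (Q : Prop) : bool := if excluded_middle_informative Q then true else false.

Lemma pdecP (Q : Prop) : pdec Q = true <-> Q.
Proof. by rewrite /pdec; case: excluded_middle_informative. Qed.

Definition cert (g : coll) : option Agent := [pick a | pdec (certP g a)].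

Definition Smech : menufun Agent Obj := fun g i =>
  if g == cempty then setT
  else if (g i != [::]) && (cert g == Some i) then (last_entry (g i)).1 :\ (last_entry (g i)).2
  else set0.

Lemma Smech_PAO : is_PAO Smech.
Proof.
split.
  move=> i; rewrite /Smech eqxx; apply/set0Pn; exists None; by rewrite in_setT.
move=> h _ hn i _; rewrite /Smech (negbTE hn).
by case: ifP => _; [exact: subxx | exact: sub0set].
Qed.

Lemma cert_some (g : coll) c : cert g = Some c -> certP g c.
Proof. by rewrite /cert; case: pickP => // x hx [<-]; apply/pdecP. Qed.

Lemma cert_none (g : coll) : cert g = None -> forall a, ~ certP g a.
Proof.
rewrite /cert; case: pickP => // hn _ a ha.
by have := hn a; move/pdecP: ha => ->.
Qed.

Lemma Smech_val (g : coll) b : g b != [::] -> Smech g b != set0 ->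
  Smech g b = (last_entry (g b)).1 :\ (last_entry (g b)).2 /\ cert g = Some b.
Proof.
move=> hn; rewrite /Smech (negbTE (coll_ne hn)) hn /=.
by case: (altP (cert g =P Some b)) => [->|_]; rewrite ?eqxx // eqxx.
Qed.

Definition Pi (P : profile) (g : coll) :=
  [/\ reachable Smech g, consc g P & forall b, mh (g b) /\ phi P b \in (last_entry (g b)).1].

Lemma Pi_step (P : profile) (g : coll) : Pi P g -> ~~ all_empty Smech g -> Pi P (step Smech (sf P) g).
Proof.
move=> [rg hc hm] ne; split.
- by apply: reach_step => //; exact: vsig_sf.
- move=> b e; rewrite /step ffunE; case: ifP => _; first exact: hc.
  rewrite mem_rcons inE => /orP[/eqP->//|]; exact: hc.
move=> b; have [mb pb] := hm b.
rewrite /step ffunE; case: ifP => [_|hS]; first by split.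
have [eS ec] := Smech_val (mh_ne mb) (negbT hS).
rewrite eS last_entry_rcons /=; split.
  by apply: mhS => //; rewrite -eS hS.
have [_ hcp] := cert_some ec.
by rewrite in_setD1 pb andbT; apply/eqP; apply: hcp.
Qed.

Lemma Pi_run (P : profile) n (g : coll) : Pi P g -> Pi P (run Smech (sf P) n g).
Proof.
elim: n g => [|n IH] g //= pg; case: ifP => // ne; apply: IH; apply: Pi_step => //.
by rewrite ne.
Qed.

Lemma Smech_seq : sequentializes Smech phi.
Proof.
move=> P i.
change (outcome Smech (sf P) cempty i = phi P i).
have ne0 : ~~ all_empty Smech cempty.
  rewrite /all_empty negb_forall; apply/existsP; exists i.
  rewrite /Smech eqxx; apply/set0Pn; exists None; by rewrite in_setT.
have P1 : Pi P (step Smech (sf P) cempty).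
  split.
  - by apply: reach_step => //; [exact: reach0 | exact: vsig_sf].
  - move=> b e; rewrite /step ffunE /Smech eqxx.
    have -> : ([set: O] == set0) = false.
      by apply: negbTE; apply/set0Pn; exists None; rewrite in_setT.
    by rewrite /coll_empty ffunE /= inE => /eqP ->.
  move=> b; rewrite /step ffunE /Smech eqxx.
  have -> : ([set: O] == set0) = false.
    by apply: negbTE; apply/set0Pn; exists None; rewrite in_setT.
  by rewrite /coll_empty ffunE /=; split; [exact: mh1 | rewrite /last_entry /= in_setT].
set F := run Smech (sf P) (fuel Agent Obj) cempty.
have PF : Pi P F by rewrite /F /fuel /= (negbTE ne0); apply: Pi_run.
have aF : all_empty Smech F.
  apply: (run_all_empty Smech_PAO (reach0 _) (vsig_sf P) (mu_empty Agent Obj)).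
rewrite /outcome -/F.
case: (MD (fun b => (last_entry (F b)).2) P) => [h|[a0 H]]; first by rewrite h.
exfalso.
have [rF cF mF] := PF.
have cP : certP F a0.
  split; first exact: mh_ne (mF a0).1.
  move=> P' c'; apply: H => b.
  exact: mh_agree (mF b).1 (cF b) (c' b).
case ec : (cert F) => [c|]; last by apply: (cert_none ec cP).
have [hnc hcp] := cert_some ec.
have hS : Smech F c != set0.
  apply/set0Pn; exists (phi P c).
  rewrite /Smech (negbTE (coll_ne hnc)) hnc ec eqxx /= in_setD1 (mF c).2 andbT.
  by apply/eqP; apply: hcp.
by move/forallP: aF => /(_ c); rewrite (negbTE hS).
Qed.
End Constr.

Lemma impl_sp (Agent Obj : finType) (phi : rule Agent Obj) :
  pao_implementable phi -> strategy_proof phi.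
Proof.
move=> [S [pao [sq pe]]] P a pa'.
have vs : is_strategy (straightforward pa') by move=> h W W0; exact: best_in.
have := pe a _ (reach0 S) (straightforward pa') vs P.
rewrite -!sq.
have -> : (fun b => if b == a then straightforward pa' else straightforward (P b)) =
          (fun b => straightforward (upd P a pa' b)).
  by apply: functional_extensionality => b; rewrite /upd; case: (b == a).
by [].
Qed.

Theorem theorem2 (Agent Obj : finType) (phi : rule Agent Obj) :
  individually_rational phi ->
  (pao_implementable phi <-> strategy_proof phi /\ monotonic_discoverability phi) /\
  (pao_implementable phi ->
     forall S : menufun Agent Obj, is_PAO S -> sequentializes S phi ->
       perfect_ex_post S (fun _ => @straightforward Obj)).
Proof.
move=> _.
have H1 : pao_implementable phi -> strategy_proof phi /\ monotonic_discoverability phi.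
  move=> hi; split; first exact: impl_sp.
  by case: hi => [S [pao [sq _]]]; exact: md_of_seq pao _ sq.
split; last first.
  move=> hi S pao sq; exact: pepe pao _ sq (impl_sp hi).
split => // [[sp md]].
exists (Smech phi); split; first exact: Smech_PAO.
split; first exact: Smech_seq.
exact: pepe (Smech_PAO phi) _ (Smech_seq md) sp.
Qed.
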